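(* Let $U=(E,\mathcal{D},\rho)$ be a U-matroid with $E\setminus\mathrm{Atom}(\mathcal{D})=\{a_1,\dots,a_m\}$, where $\mathrm{Atom}(\mathcal{D})=\{a\in E:\{a\}\in\mathcal{D}\}$. Then: 1. The iterated generous extension $\hat\rho=\rho_{a_1,\dots,a_m}=(((\rho_{a_1})_{a_2})\dots)_{a_m}$, a matroid rank function on $2^E$, dominates every other matroid extension of $\rho$ to $2^E$ (i.e. $\hat\rho(S)\ge\rho'(S)$ for all $S$ and every matroid rank function $\rho'$ on $2^E$ with $\rho'|_{\mathcal{D}}=\rho$). 2. In particular, $\hat\rho$ is an invariant of $\rho$ that is independent of the order of the $a_i$ and dominates every other matroid extension of $\rho$. 3. For every lattice $\mathcal{D}'$ with $\mathcal{D}\subseteq\mathcal{D}'\subseteq 2^E$, the lattice extension $\hat\rho|_{\mathcal{D}'}$ dominates every other lattice extension of $U$ to $\mathcal{D}'$ (U-matroid rank function on $\mathcal{D}'$ restricting to $\rho$ on $\mathcal{D}$).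
   Context: A U-matroid is a triple $(E,\mathcal{D},\rho)$ with $E$ finite, $\mathcal{D}\subseteq2^E$ an accessible distributive lattice of sets (closed under union and intersection, containing $\emptyset,E$, every nonempty member $A$ has some $x\in A$ with $A-x\in\mathcal{D}$), and $\rho:\mathcal{D}\to\mathbb{N}$ with $\rho(\emptyset)=0$, monotone, submodular, with unit increase. For $a\in E\setminus\mathrm{Atom}(\mathcal{D})$, let $\mathcal{D}[a]=\mathcal{D}\cup\{S\cup\{a\}:S\in\mathcal{D}\}$ and $\sup_\mathcal{D}(S)$ the smallest element of $\mathcal{D}$ containing $S$. The generous atom extension $\rho_a:\mathcal{D}[a]\to\mathbb{N}$ is defined by $\rho_a(S)=\rho(S)$ if $S\in\mathcal{D}$; $\rho_a(S)=\rho(S-a)$ if $S\notin\mathcal{D}$ and $\rho(S-a)=\rho(\sup_\mathcal{D}(S))$; and $\rho_a(S)=\rho(S-a)+1$ if $S\notin\mathcal{D}$ and $\rho(S-a)<\rho(\sup_\mathcal{D}(S))$. It is known that $(E,\mathcal{D}[a],\rho_a)$ is again a U-matroid, so the extension can be iterated. *)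

(* Defs.v *)
From mathcomp Require Import all_boot.
Set Implicit Arguments. Unset Strict Implicit. Unset Printing Implicit Defensive.

Section UMatroid.
Variable E : finType.

(* D is a lattice of sets: contains set0 and setT, closed under union/intersection
   (a family of sets closed under these is automatically distributive). *)
Definition is_set_lattice (D : {set {set E}}) : Prop :=
  [/\ set0 \in D, setT \in D,
      (forall A B, A \in D -> B \in D -> A :|: B \in D) &
      (forall A B, A \in D -> B \in D -> A :&: B \in D)].

Definition accessible (D : {set {set E}}) : Prop :=
  forall A, A \in D -> A != set0 -> exists2 x, x \in A & A :\ x \in D.

Definition is_adl (D : {set {set E}}) : Prop := is_set_lattice D /\ accessible D.

(* rank function rho : D -> N, represented as a total function on {set E}
   whose values outside D are irrelevant *)
Definition is_Urank (D : {set {set E}}) (rho : {set E} -> nat) : Prop :=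
  [/\ rho set0 = 0,
      (forall A B, A \in D -> B \in D -> A \subset B -> rho A <= rho B),
      (forall A B, A \in D -> B \in D ->
          rho (A :|: B) + rho (A :&: B) <= rho A + rho B) &
      (forall A B, A \in D -> B \in D -> A \subset B -> rho B <= rho A + #|B :\: A|)].

Definition is_Umatroid (D : {set {set E}}) (rho : {set E} -> nat) : Prop :=
  is_adl D /\ is_Urank D rho.

Definition is_matroid_rank (rho : {set E} -> nat) : Prop :=
  is_Umatroid [set: {set E}] rho.

Definition atoms (D : {set {set E}}) : {set E} := [set a | [set a] \in D].

Definition supD (D : {set {set E}}) (S : {set E}) : {set E} :=
  \bigcap_(A in D | S \subset A) A.

Definition ext_lattice (D : {set {set E}}) (a : E) : {set {set E}} :=
  D :|: [set A :|: [set a] | A in D].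

Definition gen_rank (D : {set {set E}}) (rho : {set E} -> nat) (a : E)
  : {set E} -> nat :=
  fun S => if S \in D then rho S
           else if rho (S :\ a) == rho (supD D S) then rho (S :\ a)
           else (rho (S :\ a)).+1.

Definition gen_ext (p : {set {set E}} * ({set E} -> nat)) (a : E)
  : {set {set E}} * ({set E} -> nat) :=
  (ext_lattice p.1 a, gen_rank p.1 p.2 a).

Definition iter_gen_ext (D : {set {set E}}) (rho : {set E} -> nat) (s : seq E)
  : {set {set E}} * ({set E} -> nat) :=
  foldl gen_ext (D, rho) s.

Definition nonatom_enum (D : {set {set E}}) (s : seq E) : Prop :=
  perm_eq s (enum (~: atoms D)).

End UMatroid.

(* Main.v *)
Require Import Defs.
From mathcomp Require Import all_boot.
From mathcomp Require Import zify.
Set Implicit Arguments. Unset Strict Implicit. Unset Printing Implicit Defensive.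

Section Work.
Variable E : finType.
Implicit Types (D F : {set {set E}}) (A B S T U X Y : {set E}).

Lemma supD_in D S : is_set_lattice D -> supD D S \in D.
Proof.
case=> _ hT _ hI; rewrite /supD.
by apply: (big_ind (fun X => X \in D)) => // i /andP[].
Qed.

Lemma supD_sub D S : S \subset supD D S.
Proof. by apply/bigcapsP => A /andP[]. Qed.

Lemma supD_min D S A : A \in D -> S \subset A -> supD D S \subset A.
Proof. by move=> hA hS; apply: (bigcap_inf A); rewrite /= hA. Qed.

Lemma ext_sub D a : D \subset ext_lattice D a.
Proof. by apply/subsetP=> X hX; rewrite /ext_lattice inE hX. Qed.

Lemma ext_inU D a A : A \in D -> A :|: [set a] \in ext_lattice D a.
Proof. by move=> hA; rewrite /ext_lattice inE; apply/orP; right; apply/imsetP; exists A. Qed.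

Lemma extP2 D a X : X \in ext_lattice D a ->
  X \in D \/ exists2 A, A \in D & X = A :|: [set a].
Proof. by rewrite /ext_lattice inE => /orP[->|/imsetP[A hA ->]]; [left|right; exists A]. Qed.

Lemma extP D a X : X \in ext_lattice D a ->
  X \in D \/ (a \in X /\ X :\ a \in D).
Proof.
move=> /extP2[->|[A hA ->]]; first by left.
case: (boolP (a \in A)) => ha.
  left; suff -> : A :|: [set a] = A by [].
  by apply/setP=> x; rewrite !inE; case: (eqVneq x a) => [->|]; rewrite ?ha ?orbT ?orbF.
right; split; first by rewrite !inE eqxx orbT.
suff -> : (A :|: [set a]) :\ a = A by [].
apply/setP=> x; rewrite !inE; case: (eqVneq x a) => [->|hx] /=.
  by rewrite (negbTE ha).
by rewrite orbF.
Qed.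

Lemma ext_nD D a X : X \in ext_lattice D a -> X \notin D ->
  a \in X /\ X :\ a \in D.
Proof. by move=> /extP[->|] . Qed.

Lemma ext_lat D a : is_set_lattice D -> is_set_lattice (ext_lattice D a).
Proof.
case=> h0 hT hU hI; have sD := subsetP (ext_sub D a).
split; [exact: sD | exact: sD | |].
- move=> A B /extP2[hA|[A0 hA ->]] /extP2[hB|[B0 hB ->]].
  + by apply: sD; apply: hU.
  + rewrite setUA; exact: ext_inU (hU _ _ hA hB).
  + rewrite setUAC; exact: ext_inU (hU _ _ hA hB).
  + have -> : A0 :|: [set a] :|: (B0 :|: [set a]) = (A0 :|: B0) :|: [set a].
      by apply/setP=> x; rewrite !inE; case: (x == a); rewrite ?orbT ?orbF.
    exact: ext_inU (hU _ _ hA hB).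
- move=> A B /extP2[hA|[A0 hA ->]] /extP2[hB|[B0 hB ->]].
  + by apply: sD; apply: hI.
  + case: (boolP (a \in A)) => ha.
      have -> : A :&: (B0 :|: [set a]) = (A :&: B0) :|: [set a].
        by apply/setP=> x; rewrite !inE; case: eqP => [->|]; rewrite ?ha ?andbT ?orbT ?orbF.
      exact: ext_inU (hI _ _ hA hB).
    have -> : A :&: (B0 :|: [set a]) = (A :&: B0).
      by apply/setP=> x; rewrite !inE; case: eqP => [->|]; rewrite ?(negbTE ha) ?orbF.
    exact: sD (hI _ _ hA hB).
  + case: (boolP (a \in B)) => ha.
      have -> : (A0 :|: [set a]) :&: B = (A0 :&: B) :|: [set a].
        by apply/setP=> x; rewrite !inE; case: eqP => [->|]; rewrite ?ha ?andbT ?orbT ?orbF.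
      exact: ext_inU (hI _ _ hA hB).
    have -> : (A0 :|: [set a]) :&: B = (A0 :&: B).
      by apply/setP=> x; rewrite !inE; case: eqP => [->|]; rewrite ?(negbTE ha) ?orbF ?andbF.
    exact: sD (hI _ _ hA hB).
  + have -> : (A0 :|: [set a]) :&: (B0 :|: [set a]) = (A0 :&: B0) :|: [set a].
      by apply/setP=> x; rewrite !inE; case: (x == a); rewrite ?orbT ?orbF.
    exact: ext_inU (hI _ _ hA hB).
Qed.

Section Gen.
Variables (D : {set {set E}}) (rho : {set E} -> nat) (a : E).
Hypothesis hL : is_set_lattice D.
Hypothesis hR : is_Urank D rho.

Let ra := gen_rank D rho a.
Let Dx := ext_lattice D a.

Let hM : forall A B, A \in D -> B \in D -> A \subset B -> rho A <= rho B.
Proof. by case: hR. Qed.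
Let hS : forall A B, A \in D -> B \in D ->
          rho (A :|: B) + rho (A :&: B) <= rho A + rho B.
Proof. by case: hR. Qed.
Let hUI : forall A B, A \in D -> B \in D -> A \subset B -> rho B <= rho A + #|B :\: A|.
Proof. by case: hR. Qed.
Let hU : forall A B, A \in D -> B \in D -> A :|: B \in D.
Proof. by case: hL. Qed.
Let hI : forall A B, A \in D -> B \in D -> A :&: B \in D.
Proof. by case: hL. Qed.

Lemma gen_D S : S \in D -> ra S = rho S.
Proof. by move=> h; rewrite /ra /gen_rank h. Qed.

Lemma gen_min X : X \in Dx -> X \notin D ->
  ra X = minn (rho (supD D X)) (rho (X :\ a)).+1.
Proof.
move=> hX nX; have [haX hXa] := ext_nD hX nX.
have le : rho (X :\ a) <= rho (supD D X).
  apply: hM => //; first exact: supD_in.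
  exact: subset_trans (subD1set X a) (supD_sub D X).
rewrite /ra /gen_rank (negbTE nX); case: eqP => h; lia.
Qed.

Lemma L1 X Y : X \in Dx -> Y \in D -> X \subset Y -> ra X <= rho Y.
Proof.
move=> hX hY sXY; case: (boolP (X \in D)) => xD.
  by rewrite gen_D //; apply: hM.
rewrite gen_min //.
have : rho (supD D X) <= rho Y by apply: hM => //; [exact: supD_in | exact: supD_min].
lia.
Qed.

Lemma L2 X Y : X \in Dx -> Y \in D -> X \subset Y :|: [set a] -> ra X <= (rho Y).+1.
Proof.
move=> hX hY sXY; case: (boolP (X \in D)) => xD.
  rewrite gen_D //.
  have h1 := hUI (hI xD hY) xD (subsetIl X Y).
  have h2 : rho (X :&: Y) <= rho Y by apply: hM => //; [exact: hI | exact: subsetIr].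
  have h3 : #|X :\: (X :&: Y)| <= 1.
    rewrite -(cards1 a); apply: subset_leq_card; apply/subsetP=> x.
    rewrite !inE => /andP[hn hx]; move/subsetP: sXY => /(_ x hx).
    rewrite !inE hx /= in hn *; by rewrite (negbTE hn).
  lia.
have [haX hXa] := ext_nD hX xD.
rewrite gen_min //.
have : rho (X :\ a) <= rho Y.
  apply: hM => //; apply/subsetP=> x; rewrite !inE => /andP[hxa hx].
  by move/subsetP: sXY => /(_ x hx); rewrite !inE (negbTE hxa) orbF.
lia.
Qed.

Lemma sub_Da X Y : X \in Dx -> X \notin D -> Y \in D -> Y \subset X -> Y \subset X :\ a.
Proof.
move=> hX xD hY sYX; have [haX hXa] := ext_nD hX xD.
case: (boolP (a \in Y)) => haY.
  have : X = Y :|: (X :\ a).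
    apply/setP=> x; rewrite !inE; case: (eqVneq x a) => [->|hx] /=; first by rewrite haY haX.
    case: (boolP (x \in Y)) => //= hxY; by rewrite (subsetP sYX).
  by move=> eX; rewrite eX hU in xD.
apply/subsetP=> x hx; rewrite !inE (subsetP sYX) // andbT.
by apply: contraNneq haY => <-.
Qed.

Lemma L3 X Y : X \in Dx -> Y \in D -> Y \subset X -> rho Y <= ra X.
Proof.
move=> hX hY sYX; case: (boolP (X \in D)) => xD.
  by rewrite gen_D //; apply: hM.
have [haX hXa] := ext_nD hX xD.
rewrite gen_min //.
have h1 : rho Y <= rho (X :\ a) by apply: hM => //; exact: sub_Da.
have h2 : rho (X :\ a) <= rho (supD D X).
  apply: hM => //; first exact: supD_in.
  exact: subset_trans (subD1set X a) (supD_sub D X).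
lia.
Qed.

Lemma Rep X : X \in Dx ->
  (exists U, [/\ U \in D, X \subset U & ra X = rho U]) \/
  (exists S, [/\ S \in D, X \subset S :|: [set a] & ra X = (rho S).+1]).
Proof.
move=> hX; case: (boolP (X \in D)) => xD.
  by left; exists X; rewrite gen_D.
have [haX hXa] := ext_nD hX xD.
rewrite gen_min //; case: (leqP (rho (supD D X)) (rho (X :\ a)).+1) => h.
  left; exists (supD D X); split; [exact: supD_in | exact: supD_sub | lia].
right; exists (X :\ a); split => //.
apply/subsetP=> x hx; rewrite !inE hx andbT; by case: (x == a); rewrite ?orbT.
Qed.

Lemma gen_mono A B : A \in Dx -> B \in Dx -> A \subset B -> ra A <= ra B.
Proof.
move=> hA hB sAB; case: (boolP (B \in D)) => bD.
  by rewrite (gen_D bD); apply: L1.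
case: (boolP (A \in D)) => aD.
  by rewrite (gen_D aD); apply: L3.
have [haA hAa] := ext_nD hA aD; have [haB hBa] := ext_nD hB bD.
rewrite !gen_min //.
have h1 : rho (supD D A) <= rho (supD D B).
  apply: hM; try exact: supD_in.
  apply: supD_min; first exact: supD_in.
  exact: subset_trans sAB (supD_sub D B).
have h2 : rho (A :\ a) <= rho (B :\ a) by apply: hM => //; exact: setSD.
clear -h1 h2; lia.
Qed.

Lemma gen_sub A B : A \in Dx -> B \in Dx ->
  ra (A :|: B) + ra (A :&: B) <= ra A + ra B.
Proof.
move=> hA hB.
have hUx : A :|: B \in Dx by case: (ext_lat a hL) => _ _ h _; apply: h.
have hIx : A :&: B \in Dx by case: (ext_lat a hL) => _ _ _ h; apply: h.
have mixed : forall A B U S, A \in Dx -> B \in Dx -> A :|: B \in Dx -> A :&: B \in Dx ->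
    U \in D -> A \subset U -> ra A = rho U ->
    S \in D -> B \subset S :|: [set a] -> ra B = (rho S).+1 ->
    ra (A :|: B) + ra (A :&: B) <= ra A + ra B.
  move=> A1 B1 U S hA1 hB1 hU1 hI1 hUD sAU eA hSD sBS eB.
  have := hS hUD hSD; rewrite eA eB.
  case: (boolP (a \in U)) => haU.
    have h1 : ra (A1 :|: B1) <= rho (U :|: S).
      apply: L1 => //; first exact: hU.
      apply/subsetP=> x; rewrite inE => /orP[hx|hx].
        by rewrite inE (subsetP sAU).
      move/subsetP: sBS => /(_ x hx); rewrite !inE; case: eqP => [->|]; rewrite ?haU //.
      by rewrite orbF => _ ->; rewrite orbT.
    have h2 : ra (A1 :&: B1) <= (rho (U :&: S)).+1.
      apply: L2 => //; first exact: hI.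
      apply/subsetP=> x; rewrite inE => /andP[hx1 hx2].
      move/subsetP: sBS => /(_ x hx2); rewrite !inE (subsetP sAU) //=.
    clear -h1 h2; lia.
  have h1 : ra (A1 :|: B1) <= (rho (U :|: S)).+1.
    apply: L2 => //; first exact: hU.
    apply/subsetP=> x; rewrite inE => /orP[hx|hx].
      by rewrite !inE (subsetP sAU).
    by move/subsetP: sBS => /(_ x hx); rewrite !inE; case/orP=> ->; rewrite ?orbT.
  have h2 : ra (A1 :&: B1) <= rho (U :&: S).
    apply: L1 => //; first exact: hI.
    apply/subsetP=> x; rewrite inE => /andP[hx1 hx2].
    have hxU := subsetP sAU x hx1.
    move/subsetP: sBS => /(_ x hx2); rewrite !inE hxU /=; case/orP => // /eqP ex.
    by move: haU; rewrite -ex hxU.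
  clear -h1 h2; lia.
case: (Rep hA) => [[U1 [hU1 sA1 eA]]|[S1 [hS1 sA1 eA]]];
case: (Rep hB) => [[U2 [hU2 sB2 eB]]|[S2 [hS2 sB2 eB]]].
- have h1 : ra (A :|: B) <= rho (U1 :|: U2) by apply: L1 => //; [exact: hU | exact: setUSS].
  have h2 : ra (A :&: B) <= rho (U1 :&: U2) by apply: L1 => //; [exact: hI | exact: setISS].
  have := hS hU1 hU2; lia.
- exact: (mixed A B U1 S2).
- have := mixed B A U2 S1 hB hA _ _ hU2 sB2 eB hS1 sA1 eA.
  rewrite (setUC B A) (setIC B A) [ra B + _]addnC; exact.
- have h1 : ra (A :|: B) <= (rho (S1 :|: S2)).+1.
    apply: L2 => //; first exact: hU.
    apply/subsetP=> x; rewrite inE => /orP[hx|hx].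
      by move/subsetP: sA1 => /(_ x hx); rewrite !inE; case/orP=> ->; rewrite ?orbT.
    by move/subsetP: sB2 => /(_ x hx); rewrite !inE; case/orP=> ->; rewrite ?orbT.
  have h2 : ra (A :&: B) <= (rho (S1 :&: S2)).+1.
    apply: L2 => //; first exact: hI.
    apply/subsetP=> x; rewrite inE => /andP[hx1 hx2].
    move/subsetP: sA1 => /(_ x hx1); move/subsetP: sB2 => /(_ x hx2); rewrite !inE.
    by case: (x == a); rewrite ?orbT ?orbF // => -> ->.
  have := hS hS1 hS2; lia.
Qed.

Lemma card_D1U X Y : a \in X -> #|Y :\: (X :\ a)| <= #|Y :\: X| + 1.
Proof.
move=> haX; have : Y :\: (X :\ a) \subset a |: (Y :\: X).
  apply/subsetP=> x; rewrite !inE; case: (x == a) => //=.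
move/subset_leq_card; rewrite cardsU1; case: (a \in _); lia.
Qed.

Lemma gen_unit A B : A \in Dx -> B \in Dx -> A \subset B -> ra B <= ra A + #|B :\: A|.
Proof.
move=> hA hB sAB; case: (boolP (B \in D)) => bD; case: (boolP (A \in D)) => aD.
- by rewrite !gen_D //; apply: hUI.
- have [haA hAa] := ext_nD hA aD.
  rewrite gen_D // gen_min //.
  have sD := supD_in A hL.
  have sS : supD D A \subset B by apply: supD_min.
  have h1 := hUI sD bD sS.
  have h2 : #|B :\: supD D A| <= #|B :\: A|.
    by apply: subset_leq_card; apply: setDS; exact: supD_sub.
  have h3 := hUI hAa bD (subset_trans (subD1set A a) sAB).
  have h4 := card_D1U B haA.
  lia.
- have [haB hBa] := ext_nD hB bD.
  rewrite (gen_D aD) (gen_min hB bD).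
  have sA : A \subset B :\ a by apply: sub_Da.
  have h1 := hUI aD hBa sA.
  have h2 : #|(B :\ a) :\: A| + 1 <= #|B :\: A|.
    have haA : a \notin A by apply: contraL haB => /(subsetP sA); rewrite !inE eqxx.
    rewrite (cardsD1 a (B :\: A)) !inE haA haB /= addnC.
    suff -> : (B :\ a) :\: A = (B :\: A) :\ a by [].
    by apply/setP=> x; rewrite !inE; case: (x == a); rewrite ?andbF.
  lia.
- have [haA hAa] := ext_nD hA aD; have [haB hBa] := ext_nD hB bD.
  rewrite !gen_min //.
  have sD := supD_in A hL.
  have h1 := hUI hAa hBa (setSD _ sAB).
  have h2 : #|(B :\ a) :\: (A :\ a)| <= #|B :\: A|.
    apply: subset_leq_card; apply/subsetP=> x; rewrite !inE.
    by case: (x == a).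
  have sU : supD D B \subset supD D A :|: B :\ a.
    apply: supD_min; first exact: hU.
    apply/subsetP=> x hx; rewrite !inE; case: (eqVneq x a) => [->|hxa] /=.
      by rewrite (subsetP (supD_sub D A)).
    by rewrite hx orbT.
  have h3 : rho (supD D B) <= rho (supD D A :|: B :\ a).
    apply: hM => //; [exact: supD_in | exact: hU].
  have h4 := hUI sD (hU sD hBa) (subsetUl _ _).
  have h5 : #|(supD D A :|: B :\ a) :\: supD D A| <= #|B :\: A|.
    apply: subset_leq_card; apply/subsetP=> x; rewrite !inE.
    case/andP=> hn /orP[h|/andP[_ h]]; first by rewrite h in hn.
    rewrite h andbT; apply: contra hn; exact: (subsetP (supD_sub D A)).
  clear -h1 h2 h3 h4 h5; lia.
Qed.

Lemma gen_Urank : is_Urank Dx ra.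
Proof.
split.
- by case: hR => h0 _ _ _; rewrite gen_D //; case: hL.
- exact: gen_mono.
- exact: gen_sub.
- exact: gen_unit.
Qed.

End Gen.
Lemma iter_cons D rho a s : iter_gen_ext D rho (a :: s) =
  iter_gen_ext (ext_lattice D a) (gen_rank D rho a) s.
Proof. by []. Qed.

Lemma iter_sub D rho s : D \subset (iter_gen_ext D rho s).1.
Proof.
elim: s D rho => [|a s IH] D rho; first exact: subxx.
rewrite iter_cons; exact: subset_trans (ext_sub D a) (IH _ _).
Qed.

Lemma iter_props D rho s : is_set_lattice D -> is_Urank D rho ->
  [/\ is_set_lattice (iter_gen_ext D rho s).1,
      is_Urank (iter_gen_ext D rho s).1 (iter_gen_ext D rho s).2,
      (forall S, S \in D -> (iter_gen_ext D rho s).2 S = rho S) &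
      (forall x, x \in s -> [set x] \in (iter_gen_ext D rho s).1)].
Proof.
elim: s D rho => [|a s IH] D rho hL hR; first by split.
rewrite iter_cons.
have [h1 h2 h3 h4] := IH _ _ (ext_lat a hL) (gen_Urank a hL hR).
split => //.
- move=> S hS; rewrite h3; last exact: (subsetP (ext_sub D a)).
  by rewrite /gen_rank hS.
- move=> x; rewrite inE => /orP[/eqP ->|hx]; last exact: h4.
  apply: (subsetP (iter_sub _ _ s)).
  have -> : [set a] = set0 :|: [set a] by rewrite set0U.
  by apply: ext_inU; case: hL.
Qed.

Lemma full F : is_set_lattice F -> (forall x, [set x] \in F) -> F = setT.
Proof.
case=> h0 _ hU _ h1; apply/setP=> X; rewrite inE.
suff : forall n X, #|X| <= n -> X \in F by apply.
elim=> [|n IH] Y hY.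
  by move: hY; rewrite leqn0 cards_eq0 => /eqP ->.
case: (set_0Vmem Y) => [->|[x hx]] //.
rewrite -(setD1K hx); apply: hU => //; apply: IH.
by move: hY; rewrite (cardsD1 x Y) hx.
Qed.

Lemma dom D rho s F (rho' : {set E} -> nat) : is_set_lattice D ->
  (iter_gen_ext D rho s).1 \subset F ->
  (forall A B, A \in F -> B \in F -> A \subset B -> rho' A <= rho' B) ->
  (forall A B, A \in F -> B \in F -> A \subset B -> rho' B <= rho' A + #|B :\: A|) ->
  (forall S, S \in D -> rho' S <= rho S) ->
  forall S, S \in (iter_gen_ext D rho s).1 -> rho' S <= (iter_gen_ext D rho s).2 S.
Proof.
elim: s D rho => [|a s IH] D rho hL sF hM hUI hD; first exact: hD.
rewrite iter_cons; apply: IH => //; first exact: ext_lat.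
have sEF : ext_lattice D a \subset F.
  exact: subset_trans (iter_sub _ _ s) sF.
have sDF : D \subset F := subset_trans (ext_sub D a) sEF.
move=> S hS; rewrite /gen_rank; case: (boolP (S \in D)) => sD; first exact: hD.
have [haS hSa] := ext_nD hS sD.
have supin := supD_in S hL.
case: eqP => [e|_].
  rewrite e; apply: leq_trans (hD _ supin).
  apply: hM; [exact: (subsetP sEF) | exact: (subsetP sDF) | exact: supD_sub].
have h1 := hUI _ _ (subsetP sDF _ hSa) (subsetP sEF _ hS) (subD1set S a).
have h2 := hD _ hSa.
have h3 : #|S :\: (S :\ a)| <= 1.
  rewrite -(cards1 a); apply: subset_leq_card; apply/subsetP=> x.
  by rewrite !inE; case: (x == a); case: (x \in S).
lia.
Qed.

Lemma main1 D rho s : is_set_lattice D -> is_Urank D rho ->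
  (forall x, x \notin atoms D -> x \in s) ->
  [/\ (iter_gen_ext D rho s).1 = [set: {set E}],
      is_matroid_rank (iter_gen_ext D rho s).2,
      (forall S, S \in D -> (iter_gen_ext D rho s).2 S = rho S) &
      (forall rho' : {set E} -> nat, is_matroid_rank rho' ->
         (forall S, S \in D -> rho' S = rho S) ->
         forall S, rho' S <= (iter_gen_ext D rho s).2 S)].
Proof.
move=> hL hR hs.
have [h1 h2 h3 h4] := iter_props s hL hR.
have eT : (iter_gen_ext D rho s).1 = [set: {set E}].
  apply: full => // x; case: (boolP (x \in atoms D)) => hx.
    by apply: (subsetP (iter_sub D rho s)); move: hx; rewrite inE.
  exact: h4 (hs _ hx).
split => //.
- split; last by rewrite -eT.
  split; first by split => *; rewrite in_setT.
  by move=> A _ /set0Pn [x hx]; exists x; rewrite ?in_setT.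
- move=> rho' [_ [_ hM _ hUI]] hD S.
  apply: (dom (F := [set: {set E}])) => //.
  + by move=> T hT; rewrite hD.
  + by rewrite eT in_setT.
Qed.

End Work.

Unset Implicit Arguments.
Theorem theorem4p12 (E : finType) (D : {set {set E}}) (rho : {set E} -> nat)
    (hU : is_Umatroid D rho) (s : seq E) (hs : nonatom_enum D s) :
  let rhohat := (iter_gen_ext D rho s).2 in
  (* 1. rhohat is a matroid rank function on 2^E extending rho, and it
        dominates every matroid extension of rho *)
  [/\ (iter_gen_ext D rho s).1 = [set: {set E}],
      is_matroid_rank rhohat &
      (forall S, S \in D -> rhohat S = rho S)] /\
  [/\
      (forall rho' : {set E} -> nat, is_matroid_rank rho' ->
         (forall S, S \in D -> rho' S = rho S) ->
         forall S, rho' S <= rhohat S),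
  (* 2. rhohat does not depend on the order of the non-atoms *)
      (forall s' : seq E, nonatom_enum D s' ->
         forall S, (iter_gen_ext D rho s').2 S = rhohat S) &
  (* 3. for every lattice D' with D ⊆ D' ⊆ 2^E, rhohat|D' is a lattice extension
        (when D' is accessible, as the U-matroid notion requires) and it
        dominates every lattice extension of U to D' *)
      (forall D' : {set {set E}}, D \subset D' -> is_set_lattice D' ->
         (accessible D' -> is_Umatroid D' rhohat) /\
         (forall rho' : {set E} -> nat, is_Umatroid D' rho' ->
            (forall S, S \in D -> rho' S = rho S) ->
            forall S, S \in D' -> rho' S <= rhohat S))].
Proof.
move=> rhohat.
case: hU => [[hL _] hR].
have cov : forall s', nonatom_enum D s' -> forall x, x \notin atoms D -> x \in s'.
  by move=> s' hs' x hx; rewrite (perm_mem hs') mem_enum inE.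
have [m1 m2 m3 m4] := main1 hL hR (cov s hs).
split; first by split.
split => //.
- move=> s' hs' S.
  have [n1 n2 n3 n4] := main1 hL hR (cov s' hs').
  apply/eqP; rewrite eqn_leq; apply/andP; split.
    exact: m4.
  exact: n4.
- move=> D' sDD' hL'; split.
    move=> hacc; split => //.
    case: m2 => _ [r0 rM rS rU]; split => // *; 
      [apply: rM | apply: rS | apply: rU]; by rewrite ?in_setT.
  move=> rho' [[hL'' _] hR'] hD S hS.
  have [k1 k2 k3 k4] := main1 (s := enum [set: E]) hL'' hR' (fun x _ => ltac:(by rewrite mem_enum in_setT)).
  rewrite -k3 //; apply: m4 => // T hT.
  by rewrite k3 ?hD // (subsetP sDD').
Qed.
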